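(* Let $\mathcal{N}=(N,M_0)$ be a two-level PT-net system with transitions partitioned into low-level $L$ and high-level $H$. Then $\mathcal{N}$ has the property SBNDC if and only if for every reachable marking $M_1$ of $\mathcal{N}$ and every $h\in H$, $M_1[h\rangle M_2$ implies $\mathcal{L}(N\setminus H,M_1)=\mathcal{L}(N\setminus H,M_2)$.
   Context: A PT-net is $N=(P,T,F)$ with $P,T$ finite disjoint and $F:(P\times T)\cup(T\times P)\to\mathbb{N}$; markings $M:P\to\mathbb{N}$; $t$ enabled at $M$ ($M[t\rangle$) iff $M(p)\ge F(p,t)$ for all $p$, firing gives $M'(p)=M(p)+F(t,p)-F(p,t)$ ($M[t\rangle M'$); extended to sequences. Reachable markings are those $M$ with $M_0[s\rangle M$. $N\setminus H$ deletes the transitions of $H$. $\mathcal{L}(N\setminus H,M)$ is the set of all $s\in L^*$ with $M[s\rangle$ in $N\setminus H$. Two net systems all of whose transitions are observable are weakly bisimilar if there is a relation $R$ between their reachable markings containing the initial pair such that for $(M,M')\in R$ each step $M[t\rangle M''$ is matched by $M'[t\rangle M'''$ with $(M'',M''')\in R$, and symmetrically. SBNDC: for every reachable marking $M_1$ of $\mathcal{N}$ and every $h\in H$, $M_1[h\rangle M_2$ implies that $(N\setminus H,M_1)$ and $(N\setminus H,M_2)$ are weakly bisimilar. *)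

(* Defs.v *)
From mathcomp Require Import all_boot.
Set Implicit Arguments. Unset Strict Implicit. Unset Printing Implicit Defensive.

(* A PT-net N = (P, T, F): P and T are finite types (disjoint since they are
   distinct types); the flow function F is split into
   pre t p = F(p,t) and post t p = F(t,p). *)
Record ptnet (P T : finType) := PTNet {
  pre  : T -> P -> nat ;
  post : T -> P -> nat }.

Definition marking (P : finType) := P -> nat.

Section Firing.
Variables (P T : finType) (N : ptnet P T).

Definition enabled (M : marking P) (t : T) : Prop :=
  forall p, pre N t p <= M p.

Definition fire (M : marking P) (t : T) (M' : marking P) : Prop :=
  enabled M t /\ forall p, M' p = M p + post N t p - pre N t p.

(* M[s> M' in the net restricted to the transitions satisfying [allowed]
   (allowed = predT : the net N itself; allowed = L : the net N \ H). *)
Fixpoint fires (allowed : pred T) (M : marking P) (s : seq T) (M' : marking P)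
  : Prop :=
  match s with
  | [::] => M' = M
  | t :: s' => allowed t /\ exists M1, fire M t M1 /\ fires allowed M1 s' M'
  end.

Definition reach (allowed : pred T) (M M' : marking P) : Prop :=
  exists s, fires allowed M s M'.

End Firing.

Section TwoLevel.
Variables (P T : finType) (N : ptnet P T) (M0 : marking P).
Variable H : pred T.

Definition low : pred T := predC H.

Definition reachable (M : marking P) : Prop := reach N predT M0 M.

Definition lang (M : marking P) : seq T -> Prop :=
  fun s => exists M', fires N low M s M'.

(* (N\H, M1) and (N\H, M2) are weakly bisimilar (all transitions observable):
   a relation between their reachable markings containing (M1, M2) and
   satisfying the transfer property in both directions. *)
Definition weakly_bisimilar (M1 M2 : marking P) : Prop :=
  exists R : marking P -> marking P -> Prop,
    R M1 M2 /\
    (forall M M', R M M' -> reach N low M1 M /\ reach N low M2 M') /\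
    (forall M M', R M M' -> forall t M'', low t -> fire N M t M'' ->
        exists M''', fire N M' t M''' /\ R M'' M''') /\
    (forall M M', R M M' -> forall t M''', low t -> fire N M' t M''' ->
        exists M'', fire N M t M'' /\ R M'' M''').

Definition SBNDC : Prop :=
  forall M1, reachable M1 -> forall h, H h -> forall M2, fire N M1 h M2 ->
    weakly_bisimilar M1 M2.

End TwoLevel.

(* Main.v *)
Require Import Defs.
From mathcomp Require Import all_boot.
From Stdlib Require Import FunctionalExtensionality PropExtensionality.

Section Aux.
Variables (P T : finType) (N : ptnet P T).

Lemma fire_det (M A B : marking P) t : fire N M t A -> fire N M t B -> A = B.
Proof.
move=> [_ HA] [_ HB]; apply: functional_extensionality => p.
by rewrite HA HB.
Qed.

Lemma fires_det a s : forall (M A B : marking P),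
  fires N a M s A -> fires N a M s B -> A = B.
Proof.
elim: s => [|t s IH] M A B /=; first by move=> -> ->.
move=> [_ [M1 [F1 R1]]] [_ [M2 [F2 R2]]].
have E : M1 = M2 by exact: fire_det F1 F2. subst M2.
exact: IH R1 R2.
Qed.

Lemma fires_cat a s s' : forall (M X : marking P),
  fires N a M (s ++ s') X <-> exists Y, fires N a M s Y /\ fires N a Y s' X.
Proof.
elim: s => [|t s IH] M X /=.
  split; [by move=> h; exists M | by move=> [Y [-> h]]].
split.
  move=> [at_ [M1 [F1 R1]]]; have [Y [h1 h2]] := (IH M1 X).1 R1.
  by exists Y; split => //; split => //; exists M1.
move=> [Y [[at_ [M1 [F1 R1]]] h2]]; split => //; exists M1; split => //.
by apply/(IH M1 X).2; exists Y.
Qed.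
End Aux.

Theorem proposition5 (P T : finType) (N : ptnet P T) (M0 : marking P)
    (H : pred T) :
  SBNDC N M0 H <->
  (forall M1, reachable N M0 M1 -> forall h, H h -> forall M2,
     fire N M1 h M2 -> lang N H M1 = lang N H M2).
Proof.
split.
- move=> S M1 RM1 h Hh M2 F.
  have [R [R12 [_ [Fw Bw]]]] := S M1 RM1 h Hh M2 F.
  have key : forall (R : marking P -> marking P -> Prop),
    (forall M M', R M M' -> forall t M'', low H t -> fire N M t M'' ->
        exists M''', fire N M' t M''' /\ R M'' M''') ->
    forall s M M' X, R M M' -> fires N (low H) M s X ->
      exists X', fires N (low H) M' s X'.
    move=> R0 Hf; elim => [|t s IH] M M' X RM /=.
      by move=> _; exists M'.
    move=> [lt [Y [FY RY]]].
    have [Y' [FY' RY']] := Hf _ _ RM t Y lt FY.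
    have [X' HX'] := IH _ _ _ RY' RY.
    by exists X'; split => //; exists Y'.
  apply: functional_extensionality => s; apply: propositional_extensionality.
  rewrite /lang; split.
    by move=> [X HX]; exact: (key R Fw s M1 M2 X R12 HX).
  move=> [X HX].
  apply: (key (fun a b => R b a) _ s M2 M1 X R12 HX).
  move=> M M' RM t M'' lt FM.
  by have [Y [FY RY]] := Bw _ _ RM t M'' lt FM; exists Y.
- move=> E M1 RM1 h Hh M2 F.
  have L := E M1 RM1 h Hh M2 F.
  have step : forall A B, lang N H A = lang N H B ->
      forall s M M' t M'', fires N (low H) A s M -> fires N (low H) B s M' ->
      low H t -> fire N M t M'' ->
      exists M''', fire N M' t M''' /\
        fires N (low H) A (s ++ [:: t]) M'' /\ fires N (low H) B (s ++ [:: t]) M'''.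
    move=> A B LAB s M M' t M'' FA FB lt FM.
    have FA' : fires N (low H) A (s ++ [:: t]) M''.
      apply/fires_cat; exists M; split => //=; split => //; by exists M''.
    have : lang N H B (s ++ [:: t]) by rewrite -LAB; exists M''.
    move=> [X /fires_cat [Y [FY [_ [Z [FZ EZ]]]]]].
    have EY : Y = M' by exact: fires_det FY FB. subst Y X.
    exists Z; split => //; split => //.
    apply/fires_cat; exists M'; split => //=; split => //; by exists Z.
  exists (fun M M' => exists s, fires N (low H) M1 s M /\ fires N (low H) M2 s M').
  split; first by exists [::].
  split; first by move=> M M' [s [h1 h2]]; split; [exists s | exists s].
  split.
    move=> M M' [s [h1 h2]] t M'' lt FM.
    have [M''' [F3 [G1 G2]]] := step _ _ L s M M' t M'' h1 h2 lt FM.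
    by exists M'''; split => //; exists (s ++ [:: t]).
  move=> M M' [s [h1 h2]] t M''' lt FM.
  have [M'' [F3 [G1 G2]]] := step _ _ (esym L) s M' M t M''' h2 h1 lt FM.
  by exists M''; split => //; exists (s ++ [:: t]).
Qed.
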